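(* If $L_1$ is a context-free language and $L_2$ is a regular language (over the same finite alphabet), then $L_1 \leftarrow L_2$ and $L_2 \leftarrow L_1$ are context-free.
   Context: Outfix-guided insertion: $x \leftarrow y = \{ x_1 u z v x_2 \mid x = x_1 u v x_2,\ y = u z v,\ u \neq \varepsilon,\ v \neq \varepsilon \}$; for languages, $L_1 \leftarrow L_2 = \bigcup_{x \in L_1, y \in L_2} x \leftarrow y$. *)

(* Defs.v *)
From mathcomp Require Import all_boot.
From Stdlib Require Import Relations.
Set Implicit Arguments. Unset Strict Implicit. Unset Printing Implicit Defensive.

Definition word (Sigma : finType) := seq Sigma.
Definition language (Sigma : finType) := word Sigma -> Prop.

Definition regular (Sigma : finType) (L : language Sigma) : Prop :=
  exists (Q : finType) (q0 : Q) (delta : Q -> Sigma -> Q) (F : pred Q),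
    forall w : word Sigma, L w <-> foldl delta q0 w \in F.

Section CFG.
Variables (Sigma N : finType).
Definition sform := seq (N + Sigma)%type.

Definition cfg_step (P : seq (N * sform)) (u v : sform) : Prop :=
  exists (x y : sform) (A : N) (rhs : sform),
    (A, rhs) \in P /\ u = x ++ inl A :: y /\ v = x ++ rhs ++ y.

Definition cfg_derives (P : seq (N * sform)) : relation sform :=
  clos_refl_trans sform (cfg_step P).
End CFG.

Definition context_free (Sigma : finType) (L : language Sigma) : Prop :=
  exists (N : finType) (S : N) (P : seq (N * sform Sigma N)),
    forall w : word Sigma,
      L w <-> cfg_derives P [:: inl S] (map inr w).

(* Outfix-guided insertion of words:
   x <- y = { x1 u z v x2 | x = x1 u v x2, y = u z v, u <> eps, v <> eps } *)
Definition ogi_word (Sigma : finType) (x y w : word Sigma) : Prop :=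
  exists x1 u z v x2 : word Sigma,
    [/\ x = x1 ++ u ++ v ++ x2, y = u ++ z ++ v, u <> [::], v <> [::]
      & w = x1 ++ u ++ z ++ v ++ x2].

Definition ogi (Sigma : finType) (L1 L2 : language Sigma) : language Sigma :=
  fun w => exists x y, L1 x /\ L2 y /\ ogi_word x y w.

(* Main.v *)
From HB Require Import structures.
Require Import Defs.
From mathcomp Require Import all_boot.
From Stdlib Require Import Relations.
Set Implicit Arguments. Unset Strict Implicit. Unset Printing Implicit Defensive.

Section DV.
Variables (Sigma N : finType) (P : seq (N * sform Sigma N)).

Inductive dv : sform Sigma N -> word Sigma -> Prop :=
| dv_nil : dv [::] [::]
| dv_t a f w : dv f w -> dv (inr a :: f) (a :: w)
| dv_n A rhs f w1 w2 : (A, rhs) \in P -> dv rhs w1 -> dv f w2 -> dv (inl A :: f) (w1 ++ w2).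

Lemma dv_cat f1 f2 w1 w2 : dv f1 w1 -> dv f2 w2 -> dv (f1 ++ f2) (w1 ++ w2).
Proof.
move=> H; elim: H w2 => //= [a f w _ IH|A rhs f u1 u2 HP H1 _ _ IH] w2 H2.
- by constructor; apply IH.
- rewrite -catA; apply: dv_n HP H1 _; exact: IH.
Qed.

Lemma dv_split f1 f2 w : dv (f1 ++ f2) w ->
  exists w1 w2, w = w1 ++ w2 /\ dv f1 w1 /\ dv f2 w2.
Proof.
elim: f1 w => [|X f1 IH] w /= H.
- by exists [::], w; split => //; split => //; constructor.
- inversion H as [|a f w' Hf| A rhs f' u1 u2 HP Hr Hf]; subst.
  + have [w1 [w2 [-> [H1 H2]]]] := IH _ Hf.
    by exists (a :: w1), w2; split => //; split => //; constructor.
  + have [v1 [v2 [-> [H1' H2']]]] := IH _ Hf.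
    exists (u1 ++ v1), v2; rewrite catA; split => //; split => //.
    exact: dv_n HP Hr H1'.
Qed.

Lemma dv_map w : dv (map inr w) w.
Proof. by elim: w => [|a w IH] /=; constructor. Qed.

Lemma derives_ctx u v x y : cfg_derives P u v -> cfg_derives P (x ++ u ++ y) (x ++ v ++ y).
Proof.
elim => [u' v' [x' [y' [A [rhs [HP [-> ->]]]]]]| u'|u1 u2 u3 _ IH1 _ IH2].
- apply: rt_step; exists (x ++ x'), (y' ++ y), A, rhs; split => //.
  by rewrite -!catA /=; split => //; rewrite -!catA.
- exact: rt_refl.
- exact: rt_trans IH1 IH2.
Qed.

Lemma dv_derives f w : dv f w -> cfg_derives P f (map inr w).
Proof.
elim => [|a f' w' _ IH|A rhs f' w1 w2 HP _ IH1 _ IH2].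
- exact: rt_refl.
- have := derives_ctx [:: inr a] [::] IH; rewrite /= !cats0; exact.
- apply: rt_trans (rt_step _ _ _ _ _) _.
    by exists [::], f', A, rhs.
  rewrite /= map_cat.
  apply: rt_trans.
    have := derives_ctx [::] f' IH1; rewrite /=; exact.
  have := derives_ctx (map inr w1) [::] IH2; rewrite /= !cats0; exact.
Qed.

Lemma step_dv u v w : cfg_step P u v -> dv v w -> dv u w.
Proof.
move=> [x [y [A [rhs [HP [-> ->]]]]]] H.
have [w1 [w' [-> [H1 H']]]] := dv_split H.
have [w2 [w3 [-> [H2 H3]]]] := dv_split H'.
apply: dv_cat H1 _; exact: dv_n HP H2 H3.
Qed.

Lemma derives_dv f w : cfg_derives P f (map inr w) -> dv f w.
Proof.
move=> H; apply clos_rt_rt1n in H; remember (map inr w) as t eqn:Ht.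
induction H as [x|x y z Hs _ IH]; first by subst; exact: dv_map.
exact: step_dv Hs (IH Ht).
Qed.

End DV.

Section Run.
Variables (Sigma K : finType) (copy emit : K -> Sigma -> K -> bool).

Inductive run : K -> word Sigma -> word Sigma -> K -> Prop :=
| run_nil k : run k [::] [::] k
| run_copy k a k1 x w k' : copy k a k1 -> run k1 x w k' -> run k (a :: x) (a :: w) k'
| run_emit k b k1 x w k' : emit k b k1 -> run k1 x w k' -> run k x (b :: w) k'.

Lemma run_cat k x1 w1 k1 x2 w2 k2 :
  run k x1 w1 k1 -> run k1 x2 w2 k2 -> run k (x1 ++ x2) (w1 ++ w2) k2.
Proof.
elim => //= [k' a k'' x w k3 Hc _ IH|k' b k'' x w k3 He _ IH] H2.
- exact: run_copy Hc (IH H2).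
- exact: run_emit He (IH H2).
Qed.

Lemma run_split k x1 x2 w k' : run k (x1 ++ x2) w k' ->
  exists km w1 w2, w = w1 ++ w2 /\ run k x1 w1 km /\ run km x2 w2 k'.
Proof.
move=> H; remember (x1 ++ x2) as x eqn:Hx.
induction H as [k|k a k1 x w k' Hc Hr IH|k b k1 x w k' He Hr IH] in x1, Hx |- *.
- case: x1 Hx => [|//] /= <-; exists k, [::], [::]; split => //; split; constructor.
- case: x1 Hx => [|a' x1] /= Hx.
  + exists k, [::], (a :: w); split => //; split; first constructor.
    by rewrite -Hx; exact: run_copy Hc Hr.
  + case: Hx => <- Hx.
    have [km [w1 [w2 [-> [H1 H2]]]]] := IH _ Hx.
    by exists km, (a :: w1), w2; split => //; split => //; exact: run_copy Hc H1.
- have [km [w1 [w2 [-> [H1 H2]]]]] := IH _ Hx.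
  by exists km, (b :: w1), w2; split => //; split => //; exact: run_emit He H1.
Qed.

Lemma run_cons_inv k a x w k' : run k (a :: x) w k' ->
  exists k1 k2 w1 w2, w = w1 ++ a :: w2 /\ run k [::] w1 k1 /\ copy k1 a k2 /\ run k2 x w2 k'.
Proof.
move=> H; remember (a :: x) as y eqn:Hy.
induction H as [k|k a' k1 x' w k' Hc Hr IH|k b k1 x' w k' He Hr IH] in Hy |- *.
- by [].
- case: Hy => <- <-; exists k, k1, [::], w; split => //; split; first constructor.
  by split.
- have [k2 [k3 [w1 [w2 [-> [H1 [H2 H3]]]]]]] := IH Hy.
  exists k2, k3, (b :: w1), w2; split => //; split => //; exact: run_emit He H1.
Qed.

End Run.

Section Construct.
Variables (Sigma K N : finType) (copy emit : K -> Sigma -> K -> bool).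
Variables (S : N) (P : seq (N * sform Sigma N)) (k0 : K) (fin : pred K).

Definition N' := (((unit + (K * K)) + (Sigma * K * K)) + (N * K * K))%type.
Definition St : N' := inl (inl (inl tt)).
Definition Ee k k' : N' := inl (inl (inr (k, k'))).
Definition Tt a k k' : N' := inl (inr (a, k, k')).
Definition Tr A k k' : N' := inr (A, k, k').
Definition sym (X : N + Sigma) k1 k2 : N' + Sigma :=
  match X with inl A => inl (Tr A k1 k2) | inr a => inl (Tt a k1 k2) end.

Definition pairsK := [seq (k1, k2) | k1 <- enum K, k2 <- enum K].

Fixpoint lift_all (f : sform Sigma N) (k : K) : seq (K * sform Sigma N') :=
  match f with
  | [::] => [seq (k', [:: inl (Ee k k')]) | k' <- enum K]
  | X :: r => flatten [seq [seq (p.1, inl (Ee k kk.1) :: sym X kk.1 kk.2 :: p.2)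
                           | p <- lift_all r kk.2] | kk <- pairsK]
  end.

Lemma mem_lift_nil k k' g : ((k', g) \in lift_all [::] k) = (g == [:: inl (Ee k k')]).
Proof.
apply/idP/idP => /=.
- by case/mapP => k1 _ [-> ->].
- by move/eqP->; apply/mapP; exists k'; rewrite ?mem_enum.
Qed.

Lemma mem_lift_cons X r k k' g : (k', g) \in lift_all (X :: r) k <->
  exists k1 k2 g', g = inl (Ee k k1) :: sym X k1 k2 :: g' /\ (k', g') \in lift_all r k2.
Proof.
split => /=.
- case/flattenP => s /mapP [[k1 k2] _ ->] /mapP [[k'' g'] Hin [-> ->]].
  by exists k1, k2, g'.
- move=> [k1 [k2 [g' [-> Hin]]]]; apply/flattenP.
  exists [seq (p.1, inl (Ee k k1) :: sym X k1 k2 :: p.2) | p <- lift_all r k2].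
    apply/mapP; exists (k1, k2) => //; apply/allpairsP; exists (k1, k2).
    by rewrite !mem_enum.
  by apply/mapP; exists (k', g').
Qed.

Definition P1 := [seq (St, p.2) | p <- lift_all [:: inl S] k0 & fin p.1].
Definition P2 := [seq (Ee k k, [::] : sform Sigma N') | k <- enum K].
Definition P3 := [seq (Ee t.1.1.1 t.2, [:: inr t.1.1.2; inl (Ee t.1.2 t.2)] : sform Sigma N')
                 | t <- enum {: K * Sigma * K * K} & emit t.1.1.1 t.1.1.2 t.1.2].
Definition P4 := [seq (Tt t.1.2 t.1.1 t.2, [:: inr t.1.2] : sform Sigma N')
                 | t <- enum {: K * Sigma * K} & copy t.1.1 t.1.2 t.2].
Definition P5 := flatten [seq [seq (Tr pk.1.1 pk.2 q.1, q.2) | q <- lift_all pk.1.2 pk.2]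
                         | pk <- [seq (p, k) | p <- P, k <- enum K]].
Definition P' := P1 ++ P2 ++ P3 ++ P4 ++ P5.

Lemma inP1 kf g : fin kf -> (kf, g) \in lift_all [:: inl S] k0 -> (St, g) \in P'.
Proof.
move=> Hf Hin; rewrite mem_cat; apply/orP; left.
by apply/mapP; exists (kf, g); rewrite // mem_filter Hf.
Qed.

Lemma inP2 k : (Ee k k, [::]) \in P'.
Proof. by rewrite !mem_cat; apply/orP; right; apply/orP; left; apply/mapP; exists k; rewrite ?mem_enum. Qed.

Lemma inP3 k b k1 k' : emit k b k1 -> (Ee k k', [:: inr b; inl (Ee k1 k')]) \in P'.
Proof.
move=> He; rewrite !mem_cat; apply/orP; right; apply/orP; right; apply/orP; left.
by apply/mapP; exists (k, b, k1, k'); rewrite // mem_filter He mem_enum.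
Qed.

Lemma inP4 a k k' : copy k a k' -> (Tt a k k', [:: inr a]) \in P'.
Proof.
move=> Hc; rewrite !mem_cat; apply/orP; right; apply/orP; right; apply/orP; right; apply/orP; left.
by apply/mapP; exists (k, a, k'); rewrite // mem_filter Hc mem_enum.
Qed.

Lemma inP5 A rhs k k' g : (A, rhs) \in P -> (k', g) \in lift_all rhs k -> (Tr A k k', g) \in P'.
Proof.
move=> HP Hin; rewrite !mem_cat; apply/orP; right; apply/orP; right; apply/orP; right; apply/orP; right.
apply/flattenP; exists [seq (Tr A k q.1, q.2) | q <- lift_all rhs k].
  by apply/mapP; exists ((A, rhs), k) => //; apply/allpairsP; exists ((A, rhs), k); rewrite mem_enum.
by apply/mapP; exists (k', g).
Qed.


Definition semN (X : N') (w : word Sigma) : Prop :=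
  match X with
  | inl (inl (inl _)) => exists x kf, dv P [:: inl S] x /\ fin kf /\ run copy emit k0 x w kf
  | inl (inl (inr (k, k'))) => run copy emit k [::] w k'
  | inl (inr (a, k, k')) => w = [:: a] /\ copy k a k'
  | inr (A, k, k') => exists x, dv P [:: inl A] x /\ run copy emit k x w k'
  end.

Definition semS (X : N' + Sigma) (w : word Sigma) : Prop :=
  match X with inl Y => semN Y w | inr a => w = [:: a] end.

Fixpoint semf (f : sform Sigma N') (w : word Sigma) : Prop :=
  match f with
  | [::] => w = [::]
  | X :: f' => exists w1 w2, w = w1 ++ w2 /\ semS X w1 /\ semf f' w2
  end.

Lemma lift_sound f k k' g w : (k', g) \in lift_all f k -> semf g w ->
  exists x, dv P f x /\ run copy emit k x w k'.
Proof.
elim: f k k' g w => [|X r IH] k k' g w.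
- rewrite mem_lift_nil => /eqP -> /= [w1 [w2 [-> [H1 ->]]]].
  by exists [::]; rewrite cats0; split => //; constructor.
- move/mem_lift_cons => [k1 [k2 [g' [-> Hin]]]] /= [w1 [w' [-> [H1 [w2 [w3 [-> [H2 H3]]]]]]]].
  have [x3 [D3 R3]] := IH _ _ _ _ Hin H3.
  have [x2 [D2 R2]] : exists x2, dv P [:: X] x2 /\ run copy emit k1 x2 w2 k2.
    case: X H2 => [B|a] /=.
    + move=> [x2 [D2 R2]]; by exists x2.
    + move=> [-> Hc]; exists [:: a]; split; first by do 2 constructor.
      apply: run_copy Hc _; constructor.
  exists (x2 ++ x3); split; first exact: (dv_cat D2 D3).
  have -> : x2 ++ x3 = [::] ++ x2 ++ x3 by [].
  apply: run_cat H1 _; exact: run_cat R2 R3.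
Qed.

Lemma prod_sound A' g w : (A', g) \in P' -> semf g w -> semN A' w.
Proof.
rewrite !mem_cat => /orP [|/orP [|/orP [|/orP []]]].
- case/mapP => [[kf g']]; rewrite mem_filter => /andP [Hf Hin] [-> ->] Hs.
  have [x [D R]] := lift_sound Hin Hs; by exists x, kf.
- by case/mapP => k _ [-> ->] /= ->; constructor.
- case/mapP => [[[[k b] k1] k']]; rewrite mem_filter /= => /andP [He _] [-> ->].
  move=> /= [w1 [w' [-> [-> [w2 [w3 [-> [H2 ->]]]]]]]].
  rewrite cats0; exact: run_emit He H2.
- case/mapP => [[[k a] k']]; rewrite mem_filter /= => /andP [Hc _] [-> ->].
  by move=> /= [w1 [w2 [-> [-> ->]]]].
- case/flattenP => s /mapP [pk /allpairsP [[[A rhs] k] [HP _ ->]] ->] /mapP [[k' g'] Hin [-> ->]] Hs.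
  have [x [D R]] := lift_sound Hin Hs; exists x; split => //.
  rewrite -(cats0 x); apply: dv_n HP D _; constructor.
Qed.

Lemma dv'_sound f w : dv P' f w -> semf f w.
Proof.
elim => [//|a f' w' _ IH|A rhs f' w1 w2 HP _ IH1 _ IH2] /=.
- by exists [:: a], w'.
- by exists w1, w2; split => //; split => //; exact: prod_sound HP IH1.
Qed.

Lemma E_complete k w k' : run copy emit k [::] w k' -> dv P' [:: inl (Ee k k')] w.
Proof.
move=> H; remember [::] as x eqn:Hx.
induction H as [k|k a k1 x w k' Hc Hr IH|k b k1 x w k' He Hr IH].
- have := dv_n (inP2 k) (@dv_nil _ _ P') (@dv_nil _ _ P'); exact.
- by [].
- rewrite -(cats0 (b :: w)); apply: dv_n (inP3 k' He) _ (@dv_nil _ _ P').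
  by constructor; apply: IH.
Qed.

Lemma lift_complete f x : dv P f x -> forall k w k', run copy emit k x w k' ->
  exists g, (k', g) \in lift_all f k /\ dv P' g w.
Proof.
elim => [|a f' x' _ IH|B rhs f' x1 x2 HP _ IH1 _ IH2] k w k' R.
- exists [:: inl (Ee k k')]; rewrite mem_lift_nil; split => //; exact: E_complete.
- have [k1 [k2 [w1 [w2 [-> [R1 [Hc R2]]]]]]] := run_cons_inv R.
  have [g [Hin D]] := IH _ _ _ R2.
  exists (inl (Ee k k1) :: inl (Tt a k1 k2) :: g); split.
    by apply/mem_lift_cons; exists k1, k2, g.
  have -> : w1 ++ a :: w2 = w1 ++ [:: a] ++ w2 by [].
  apply: (dv_cat (f1 := [:: inl (Ee k k1)])); first exact: E_complete.
  have -> : [:: a] ++ w2 = ([:: a] ++ [::]) ++ w2 by [].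
  apply: dv_n (inP4 Hc) _ D; by do 2 constructor.
- have [km [w1 [w2 [-> [R1 R2]]]]] := run_split R.
  have [g1 [Hin1 D1]] := IH1 _ _ _ R1.
  have [g2 [Hin2 D2]] := IH2 _ _ _ R2.
  exists (inl (Ee k k) :: inl (Tr B k km) :: g2); split.
    by apply/mem_lift_cons; exists k, km, g2.
  have -> : w1 ++ w2 = [::] ++ w1 ++ w2 by [].
  apply: (dv_cat (f1 := [:: inl (Ee k k)])); first by apply: E_complete; constructor.
  apply: dv_n (inP5 HP Hin1) D1 D2.
Qed.


End Construct.

Lemma image_cf (Sigma K : finType) (copy emit : K -> Sigma -> K -> bool) (k0 : K) (fin : pred K)
  (L : language Sigma) : context_free L ->
  context_free (fun w => exists x kf, L x /\ fin kf /\ run copy emit k0 x w kf).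
Proof.
move=> [N [S [P HL]]].
exists (N' Sigma K N), (@St Sigma K N), (P' copy emit S P k0 fin) => w; split.
- move=> [x [kf [Lx [Hf R]]]].
  have D := derives_dv (proj1 (HL x) Lx).
  have [g [Hin Dg]] := @lift_complete _ _ _ copy emit S P k0 fin _ _ D _ _ _ R.
  apply: dv_derives; rewrite -(cats0 w); apply: dv_n (inP1 copy emit P Hf Hin) Dg _; constructor.
- move/derives_dv/dv'_sound => /= [w1 [w2 [-> [[x [kf [D [Hf R]]]] ->]]]].
  exists x, kf; rewrite cats0; split => //; apply/HL; exact: dv_derives.
Qed.

Inductive ph := A0 | AU | AZ | AV | AX.
Definition ph2o (p : ph) : 'I_5 :=
  inord (match p with A0 => 0 | AU => 1 | AZ => 2 | AV => 3 | AX => 4 end).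
Definition o2ph (o : 'I_5) : ph :=
  match nat_of_ord o with 0 => A0 | 1 => AU | 2 => AZ | 3 => AV | _ => AX end.
Lemma ph2oK : cancel ph2o o2ph.
Proof. by case; rewrite /o2ph /ph2o inordK. Qed.
HB.instance Definition _ := Finite.copy ph (can_type ph2oK).

Lemma cf_ext (Sigma : finType) (L L' : language Sigma) :
  (forall w, L w <-> L' w) -> context_free L -> context_free L'.
Proof.
move=> H [N [S [P HL]]]; exists N, S, P => w; split => [/H/HL|/HL/H] //.
Qed.

Section App1.
Variables (Sigma Q : finType) (q0 : Q) (delta : Q -> Sigma -> Q) (F : pred Q).

Definition copy1 (k : ph * Q) (a : Sigma) (k' : ph * Q) : bool :=
  match k.1, k'.1 with
  | A0, A0 => k'.2 == k.2
  | A0, AU => k'.2 == delta q0 a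
  | AU, AU | AU, AV | AZ, AV | AV, AV => k'.2 == delta k.2 a
  | AV, AX => (k.2 \in F) && (k'.2 == k.2)
  | AX, AX => k'.2 == k.2
  | _, _ => false
  end.
Definition emit1 (k : ph * Q) (b : Sigma) (k' : ph * Q) : bool :=
  match k.1, k'.1 with
  | AU, AZ | AZ, AZ => k'.2 == delta k.2 b
  | _, _ => false
  end.
Definition fin1 (k : ph * Q) : bool :=
  match k.1 with AV | AX => k.2 \in F | _ => false end.

Notation R := (run copy1 emit1).

Lemma RX1 k x w k' : R k x w k' -> k.1 = AX -> w = x.
Proof.
elim => [//|[p s] a [p1 s1] x0 w0 k2 Hc _ IH|[p s] b [p1 s1] x0 w0 k2 He _ IH] /= Hp; subst p.
- by case: p1 Hc IH => //= _ ->.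
- by move: He IH; case: p1.
Qed.

Lemma RV1 k x w k' : R k x w k' -> k.1 = AV -> fin1 k' ->
  w = x /\ exists v x2, x = v ++ x2 /\ foldl delta k.2 v \in F.
Proof.
elim => [[p s]|[p s] a [p1 s1] x0 w0 k2 Hc Hr IH|[p s] b [p1 s1] x0 w0 k2 He _ IH] /= Hp; subst p.
- by move=> Hf; split => //; exists [::], [::].
- case: p1 Hc IH Hr => //= Hc IH Hr Hf.
  + move/eqP: Hc => /= Hs1; subst s1; have [-> [v [x2 [-> Hv]]]] := IH erefl Hf.
    by split => //; exists (a :: v), x2.
  + case/andP: Hc => Hs _; rewrite (RX1 Hr erefl); split => //.
    by exists [::], (a :: x0).
- by move: He IH; case: p1.
Qed.

Lemma RZ1 k x w k' : R k x w k' -> k.1 = AZ -> fin1 k' ->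
  exists z v x2, [/\ x = v ++ x2, v <> [::], w = z ++ x & foldl delta k.2 (z ++ v) \in F].
Proof.
elim => [[p s]|[p s] a [p1 s1] x0 w0 k2 Hc Hr IH|[p s] b [p1 s1] x0 w0 k2 He Hr IH] /= Hp; subst p => //.
- case: p1 Hc IH Hr => //= /eqP /= Hs1 IH Hr Hf; subst s1.
  have [-> [v [x2 [-> Hv]]]] := RV1 Hr erefl Hf.
  by exists [::], (a :: v), x2.
- case: p1 He IH Hr => //= /eqP /= Hs1 IH Hr Hf; subst s1.
  have [z [v [x2 [-> Hv -> Hz]]]] := IH erefl Hf.
  by exists (b :: z), v, x2.
Qed.

Lemma RU1 k x w k' : R k x w k' -> k.1 = AU -> fin1 k' ->
  exists u z v x2, [/\ x = u ++ v ++ x2, v <> [::], w = u ++ z ++ v ++ x2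
                    & foldl delta k.2 (u ++ z ++ v) \in F].
Proof.
elim => [[p s]|[p s] a [p1 s1] x0 w0 k2 Hc Hr IH|[p s] b [p1 s1] x0 w0 k2 He Hr IH] /= Hp; subst p => //.
- case: p1 Hc IH Hr => //= /eqP /= Hs1 IH Hr Hf; subst s1.
  + have [u [z [v [x2 [-> Hv -> Hz]]]]] := IH erefl Hf.
    by exists (a :: u), z, v, x2.
  + have [-> [v [x2 [-> Hv]]]] := RV1 Hr erefl Hf.
    by exists [::], [::], (a :: v), x2.
- case: p1 He IH Hr => //= /eqP /= Hs1 IH Hr Hf; subst s1.
  have [z [v [x2 [-> Hv -> Hz]]]] := RZ1 Hr erefl Hf.
  by exists [::], (b :: z), v, x2.
Qed.

Lemma R01 k x w k' : R k x w k' -> k.1 = A0 -> fin1 k' ->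
  exists x1 u z v x2, [/\ u <> [::], v <> [::], x = x1 ++ u ++ v ++ x2,
     w = x1 ++ u ++ z ++ v ++ x2 & foldl delta q0 (u ++ z ++ v) \in F].
Proof.
elim => [[p s]|[p s] a [p1 s1] x0 w0 k2 Hc Hr IH|[p s] b [p1 s1] x0 w0 k2 He Hr IH] /= Hp; subst p => //.
- case: p1 Hc IH Hr => //= /eqP /= Hs1 IH Hr Hf; subst s1.
  + have [x1 [u [z [v [x2 [Hu Hv -> -> Hz]]]]]] := IH erefl Hf.
    by exists (a :: x1), u, z, v, x2.
  + have [u [z [v [x2 [-> Hv -> Hz]]]]] := RU1 Hr erefl Hf.
    by exists [::], (a :: u), z, v, x2.
Qed.


Lemma run0 s x : R (A0, s) x x (A0, s).
Proof. elim: x => [|a x IH]; first constructor. by apply: run_copy IH; rewrite /copy1 /= eqxx. Qed.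
Lemma runX s x : R (AX, s) x x (AX, s).
Proof. elim: x => [|a x IH]; first constructor. by apply: run_copy IH; rewrite /copy1 /= eqxx. Qed.
Lemma runU s u : R (AU, s) u u (AU, foldl delta s u).
Proof. elim: u s => [|a u IH] s; first constructor. by apply: run_copy (IH _); rewrite /copy1 /= eqxx. Qed.
Lemma runV s u : R (AV, s) u u (AV, foldl delta s u).
Proof. elim: u s => [|a u IH] s; first constructor. by apply: run_copy (IH _); rewrite /copy1 /= eqxx. Qed.
Lemma runZ s u : R (AZ, s) [::] u (AZ, foldl delta s u).
Proof. elim: u s => [|a u IH] s; first constructor. by apply: run_emit (IH _); rewrite /emit1 /= eqxx. Qed.

Lemma midU s z c v : R (AU, s) (c :: v) (z ++ c :: v) (AV, foldl delta s (z ++ c :: v)).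
Proof.
case: z => [|b z] /=.
- apply: (run_copy (k1 := (AV, delta s c))); first by rewrite /copy1 /= eqxx.
  exact: runV.
- apply: (run_emit (k1 := (AZ, delta s b))); first by rewrite /emit1 /= eqxx.
  rewrite foldl_cat; have -> : c :: v = [::] ++ c :: v by [].
  apply: run_cat (runZ _ _) _.
  apply: (run_copy (k1 := (AV, delta (foldl delta (delta s b) z) c))); first by rewrite /copy1 /= eqxx.
  exact: runV.
Qed.

Lemma tail1 s x2 : s \in F -> exists k, fin1 k /\ R (AV, s) x2 x2 k.
Proof.
case: x2 => [|c x2] Hs.
- by exists (AV, s); split => //; constructor.
- exists (AX, s); split => //; apply: run_copy (runX _ _); by rewrite /copy1 /= Hs eqxx.
Qed.

Lemma ogi1_iff (L1 L2 : language Sigma) :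
  (forall y, L2 y <-> foldl delta q0 y \in F) -> forall w,
  ogi L1 L2 w <-> exists x kf, L1 x /\ fin1 kf /\ R (A0, q0) x w kf.
Proof.
move=> HL2 w; split.
- move=> [x [y [Lx [Ly [x1 [u [z [v [x2 [Ex Ey Hu Hv Ew]]]]]]]]]].
  subst x y w; move/HL2: Ly => Hy; move: Lx Hy.
  case: u Hu => [//|a u] _; case: v Hv => [//|c v] _ Lx Hy.
  have [kf [Hf R4]] := tail1 x2 Hy.
  exists (x1 ++ (a :: u) ++ (c :: v) ++ x2), kf; split => //; split => //.
  apply: run_cat (run0 _ _) _.
  have -> : (a :: u) ++ z ++ (c :: v) ++ x2 = (a :: u) ++ (z ++ c :: v) ++ x2 by rewrite !catA.
  have Hc : copy1 (A0, q0) a (AU, delta q0 a) by rewrite /copy1 /= eqxx.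
  apply: run_cat (run_copy Hc (runU _ u)) _.
  apply: run_cat (midU _ _ _ _) _.
  by rewrite foldl_cat in Hy; rewrite /= -foldl_cat.
- move=> [x [kf [Lx [Hf R0]]]].
  have [x1 [u [z [v [x2 [Hu Hv Ex Ew Hz]]]]]] := R01 R0 erefl Hf.
  exists x, (u ++ z ++ v); split => //; split; first exact/HL2.
  by exists x1, u, z, v, x2.
Qed.

End App1.

Section App2.
Variables (Sigma Q : finType) (q0 : Q) (delta : Q -> Sigma -> Q) (F : pred Q).

Definition copy2 (k : ph * Q) (a : Sigma) (k' : ph * Q) : bool :=
  match k.1, k'.1 with
  | A0, AU | AU, AU | AU, AV | AZ, AV | AV, AV => k'.2 == delta k.2 a
  | AU, AZ | AZ, AZ => k'.2 == k.2
  | _, _ => false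
  end.
Definition emit2 (k : ph * Q) (b : Sigma) (k' : ph * Q) : bool :=
  match k.1, k'.1 with
  | A0, A0 | AV, AX | AX, AX => k'.2 == delta k.2 b
  | _, _ => false
  end.
Definition fin2 (k : ph * Q) : bool :=
  match k.1 with AV | AX => k.2 \in F | _ => false end.

Notation R := (run copy2 emit2).

Lemma RX2 k x w k' : R k x w k' -> k.1 = AX -> fin2 k' -> x = [::] /\ foldl delta k.2 w \in F.
Proof.
elim => [[p s]|[p s] a [p1 s1] x0 w0 k2 Hc Hr IH|[p s] b [p1 s1] x0 w0 k2 He Hr IH] /= Hp; subst p => //.
- case: p1 He IH Hr => //= /eqP /= Hs1 IH Hr Hf; subst s1.
  by have [-> H] := IH erefl Hf.
Qed.

Lemma RV2 k x w k' : R k x w k' -> k.1 = AV -> fin2 k' ->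
  exists x2, w = x ++ x2 /\ foldl delta k.2 (x ++ x2) \in F.
Proof.
elim => [[p s]|[p s] a [p1 s1] x0 w0 k2 Hc Hr IH|[p s] b [p1 s1] x0 w0 k2 He Hr IH] /= Hp; subst p => //.
- by move=> Hf; exists [::].
- case: p1 Hc IH Hr => //= /eqP /= Hs1 IH Hr Hf; subst s1.
  by have [x2 [-> H]] := IH erefl Hf; exists x2.
- case: p1 He IH Hr => //= /eqP /= Hs1 IH Hr Hf; subst s1.
  have [-> H] := RX2 Hr erefl Hf; by exists (b :: w0).
Qed.

Lemma RZ2 k x w k' : R k x w k' -> k.1 = AZ -> fin2 k' ->
  exists z v x2, [/\ x = z ++ v, v <> [::], w = x ++ x2 & foldl delta k.2 (v ++ x2) \in F].
Proof.
elim => [[p s]|[p s] a [p1 s1] x0 w0 k2 Hc Hr IH|[p s] b [p1 s1] x0 w0 k2 He Hr IH] /= Hp; subst p => //.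
- case: p1 Hc IH Hr => //= /eqP /= Hs1 IH Hr Hf; subst s1.
  + have [z [v [x2 [-> Hv -> H]]]] := IH erefl Hf.
    by exists (a :: z), v, x2.
  + have [x2 [-> H]] := RV2 Hr erefl Hf.
    by exists [::], (a :: x0), x2.
Qed.

Lemma RU2 k x w k' : R k x w k' -> k.1 = AU -> fin2 k' ->
  exists u z v x2, [/\ x = u ++ z ++ v, v <> [::], w = x ++ x2
                    & foldl delta k.2 (u ++ v ++ x2) \in F].
Proof.
elim => [[p s]|[p s] a [p1 s1] x0 w0 k2 Hc Hr IH|[p s] b [p1 s1] x0 w0 k2 He Hr IH] /= Hp; subst p => //.
- case: p1 Hc IH Hr => //= /eqP /= Hs1 IH Hr Hf; subst s1.
  + have [u [z [v [x2 [-> Hv -> H]]]]] := IH erefl Hf.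
    by exists (a :: u), z, v, x2.
  + have [z [v [x2 [-> Hv -> H]]]] := RZ2 Hr erefl Hf.
    by exists [::], (a :: z), v, x2.
  + have [x2 [-> H]] := RV2 Hr erefl Hf.
    by exists [::], [::], (a :: x0), x2.
Qed.

Lemma R02 k x w k' : R k x w k' -> k.1 = A0 -> fin2 k' ->
  exists x1 u z v x2, [/\ u <> [::], v <> [::], x = u ++ z ++ v,
     w = x1 ++ x ++ x2 & foldl delta k.2 (x1 ++ u ++ v ++ x2) \in F].
Proof.
elim => [[p s]|[p s] a [p1 s1] x0 w0 k2 Hc Hr IH|[p s] b [p1 s1] x0 w0 k2 He Hr IH] /= Hp; subst p => //.
- case: p1 Hc IH Hr => //= /eqP /= Hs1 IH Hr Hf; subst s1.
  have [u [z [v [x2 [-> Hv -> H]]]]] := RU2 Hr erefl Hf.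
  by exists [::], (a :: u), z, v, x2.
- case: p1 He IH Hr => //= /eqP /= Hs1 IH Hr Hf; subst s1.
  have [x1 [u [z [v [x2 [Hu Hv -> -> H]]]]]] := IH erefl Hf.
  by exists (b :: x1), u, z, v, x2.
Qed.

Lemma runE0 s x : R (A0, s) [::] x (A0, foldl delta s x).
Proof. elim: x s => [|a x IH] s; first constructor. by apply: run_emit (IH _); rewrite /emit2 /= eqxx. Qed.
Lemma runEX s x : R (AX, s) [::] x (AX, foldl delta s x).
Proof. elim: x s => [|a x IH] s; first constructor. by apply: run_emit (IH _); rewrite /emit2 /= eqxx. Qed.
Lemma runU2 s u : R (AU, s) u u (AU, foldl delta s u).
Proof. elim: u s => [|a u IH] s; first constructor. by apply: run_copy (IH _); rewrite /copy2 /= eqxx. Qed.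
Lemma runV2 s u : R (AV, s) u u (AV, foldl delta s u).
Proof. elim: u s => [|a u IH] s; first constructor. by apply: run_copy (IH _); rewrite /copy2 /= eqxx. Qed.
Lemma runZ2 s u : R (AZ, s) u u (AZ, s).
Proof. elim: u => [|a u IH]; first constructor. by apply: run_copy IH; rewrite /copy2 /= eqxx. Qed.

Lemma midU2 s z c v : R (AU, s) (z ++ c :: v) (z ++ c :: v) (AV, foldl delta s (c :: v)).
Proof.
case: z => [|b z] /=.
- apply: (run_copy (k1 := (AV, delta s c))); first by rewrite /copy2 /= eqxx.
  exact: runV2.
- apply: (run_copy (k1 := (AZ, s))); first by rewrite /copy2 /= eqxx.
  apply: run_cat (runZ2 _ _) _.
  apply: (run_copy (k1 := (AV, delta s c))); first by rewrite /copy2 /= eqxx.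
  exact: runV2.
Qed.

Lemma tail2 s x2 : foldl delta s x2 \in F -> exists k, fin2 k /\ R (AV, s) [::] x2 k.
Proof.
case: x2 => [|b x2] /= Hs.
- by exists (AV, s); split => //; constructor.
- exists (AX, foldl delta (delta s b) x2); split => //.
  apply: (run_emit (k1 := (AX, delta s b))); first by rewrite /emit2 /= eqxx.
  exact: runEX.
Qed.

Lemma ogi2_iff (L1 L2 : language Sigma) :
  (forall y, L2 y <-> foldl delta q0 y \in F) -> forall w,
  ogi L2 L1 w <-> exists y kf, L1 y /\ fin2 kf /\ R (A0, q0) y w kf.
Proof.
move=> HL2 w; split.
- move=> [x [y [Lx [Ly [x1 [u [z [v [x2 [Ex Ey Hu Hv Ew]]]]]]]]]].
  subst x y w; move/HL2: Lx => Hx; move: Ly Hx.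
  case: u Hu => [//|a u] _; case: v Hv => [//|c v] _ Ly Hx.
  rewrite !foldl_cat /= in Hx.
  have [kf [Hf R4]] := tail2 Hx.
  exists ((a :: u) ++ z ++ (c :: v)), kf; split => //; split => //.
  have -> : (a :: u) ++ z ++ (c :: v) = [::] ++ (a :: u) ++ (z ++ c :: v) ++ [::] by rewrite cats0.
  have -> : x1 ++ (a :: u) ++ z ++ (c :: v) ++ x2 = x1 ++ (a :: u) ++ (z ++ c :: v) ++ x2 by rewrite !catA.
  apply: run_cat (runE0 _ _) _.
  have Hc : copy2 (A0, foldl delta q0 x1) a (AU, delta (foldl delta q0 x1) a) by rewrite /copy2 /= eqxx.
  apply: run_cat (run_copy Hc (runU2 _ u)) _.
  exact: run_cat (midU2 _ _ _ _) R4.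
- move=> [y [kf [Ly [Hf R0]]]].
  have [x1 [u [z [v [x2 [Hu Hv Ey Ew Hz]]]]]] := R02 R0 erefl Hf.
  exists (x1 ++ u ++ v ++ x2), y; split; first exact/HL2.
  split => //; exists x1, u, z, v, x2; split => //.
  by rewrite Ew Ey -!catA.
Qed.

End App2.

Theorem theorem5p3 (Sigma : finType) (L1 L2 : language Sigma) :
  context_free L1 -> regular L2 ->
  context_free (ogi L1 L2) /\ context_free (ogi L2 L1).
Proof.
move=> H1 [Q [q0 [delta [F HL2]]]]; split.
- apply: cf_ext (image_cf (copy1 q0 delta F) (@emit1 Sigma Q delta) (A0, q0) (fin1 F) H1).
  by move=> w; apply: iff_sym; exact: (ogi1_iff L1 HL2 w).
- apply: cf_ext (image_cf (copy2 delta) (emit2 delta) (A0, q0) (fin2 F) H1).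
  by move=> w; apply: iff_sym; exact: (ogi2_iff L1 HL2 w).
Qed.
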